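(* Fix a constant arity $k\in\mathbb{N}_+$. There is a constant $C>0$ (depending only on $k$) such that for every $\varepsilon>0$ there exists an $(\varepsilon,0)$-differentially private algorithm that, on every Max-CSP instance $\Phi$ (with constraints of arity at most $k$), outputs a (random) assignment $x\in\{\pm1\}^n$ with $$\mathbb{E}[\mathrm{val}_\Phi(x)]\ \ge\ \left(1-\frac{C}{\varepsilon}\right)\mathrm{OPT}(\Phi),$$ where $\mathrm{OPT}(\Phi)$ is the maximum number of constraints of $\Phi$ satisfiable by a single assignment.
   Context: A Max-CSP instance $\Phi$ on $n$ Boolean variables $x_1,\dots,x_n\in\{\pm1\}$ is a multiset of $m$ constraints $(P_i,S_i)$, where $S_i$ is an ordered list of at most $k$ indices from $[n]$ (the scope) and $P_i:\{\pm1\}^{|S_i|}\to\{0,1\}$ is a predicate; the constraint is satisfied by $x$ if $P_i(x_{S_i})=1$, and $\mathrm{val}_\Phi(x)$ is the number of satisfied constraints. The number of variables $n$ is public. Two instances are neighboring if one is obtained from the other by adding or removing a single constraint. A randomized algorithm $\mathcal{M}$ is $(\varepsilon,\delta)$-differentially private if for all neighboring $\Phi,\Phi'$ and all measurable sets $T$ of outputs, $\Pr[\mathcal{M}(\Phi)\in T]\le e^{\varepsilon}\Pr[\mathcal{M}(\Phi')\in T]+\delta$. *)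

(* Defs.v *)
From HB Require Import structures.
From mathcomp Require Import all_boot all_order all_algebra.
From mathcomp Require Import finmap multiset.
From mathcomp Require Import reals. From mathcomp Require Import sequences exp.
Set Implicit Arguments. Unset Strict Implicit. Unset Printing Implicit Defensive.
Import Order.TTheory GRing.Theory Num.Theory.
Local Open Scope ring_scope.

(* Boolean variables in {±1} are encoded as bool (true = +1, false = -1).   *)
Definition assignment (n : nat) := {ffun 'I_n -> bool}.

Definition constraint (n : nat) :=
  {S : seq 'I_n & {ffun (size S).-tuple bool -> bool}}.

Definition scope n (c : constraint n) : seq 'I_n := tag c.
Definition arity n (c : constraint n) : nat := size (scope c).

Definition restrict n (x : assignment n) (S : seq 'I_n) : (size S).-tuple bool :=
  @Tuple (size S) bool (map x S) (introT eqP (size_map x S)).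

Definition satisfies n (c : constraint n) (x : assignment n) : bool :=
  tagged c (restrict x (tag c)).

Definition instance (n : nat) := ({mset constraint n})%mset.

Definition arity_le (k : nat) n (Phi : instance n) : Prop :=
  forall c, c \in Phi -> (arity c <= k)%N.

Definition val n (Phi : instance n) (x : assignment n) : nat :=
  count (fun c => satisfies c x) (enum_mset Phi).

Definition OPT n (Phi : instance n) : nat := \max_(x : assignment n) val Phi x.

Definition neighboring n (Phi Phi' : instance n) : Prop :=
  exists c : constraint n,
    Phi' = (c +` Phi)%mset \/ Phi = (c +` Phi')%mset.

(* A randomized algorithm with output in the finite set of assignments is   *)
(* given by its output distribution on each instance.                       *)
Definition is_distribution (R : realType) (T : finType) (p : {ffun T -> R}) : Prop :=
  (forall t, 0 <= p t) /\ \sum_(t : T) p t = 1.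

Definition prob (R : realType) (T : finType) (p : {ffun T -> R}) (A : {set T}) : R :=
  \sum_(t in A) p t.

Definition differentially_private (R : realType) (k n : nat) (eps delta : R)
    (M : instance n -> {ffun assignment n -> R}) : Prop :=
  forall Phi Phi' : instance n, arity_le k Phi -> arity_le k Phi' ->
    neighboring Phi Phi' ->
    forall T : {set assignment n},
      prob (M Phi) T <= expR eps * prob (M Phi') T + delta.

Definition expected_val (R : realType) n (Phi : instance n)
    (p : {ffun assignment n -> R}) : R :=
  \sum_(x : assignment n) p x * (val Phi x)%:R.

(* Main.v *)
Require Import Defs.
From HB Require Import structures.
From mathcomp Require Import all_boot all_order all_algebra.
From mathcomp Require Import finmap multiset.
From mathcomp Require Import reals. From mathcomp Require Import sequences exp.
From mathcomp Require Import ring lra zify.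
Import Order.TTheory GRing.Theory Num.Theory.
Local Open Scope ring_scope.

Lemma val_add n (c : constraint n) (Phi : instance n) (x : assignment n) :
  Defs.val (c +` Phi)%mset x = (satisfies c x + Defs.val Phi x)%N.
Proof.
rewrite /Defs.val.
have pe : perm_eq (enum_mset (c +` Phi)%mset) (c :: enum_mset Phi).
  rewrite /perm_eq; apply/allP => a _ /=; apply/eqP.
  by rewrite count_mem_mset mset1DE count_mem_mset eq_sym.
by rewrite (permP pe).
Qed.

Lemma ratio_bound (R : realType) (T : finType) (w w' : T -> R) (a : R) (t0 : T) :
  (forall x, 0 < w x) -> (forall x, w x <= w' x <= a * w x) ->
  forall x, w' x / (\sum_y w' y) <= a * (w x / \sum_y w y) /\
            w x / (\sum_y w y) <= a * (w' x / \sum_y w' y).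
Proof.
move=> wpos hw x.
set Z := \sum_y w y; set Z' := \sum_y w' y.
have ZZ' : Z <= Z' by apply: ler_sum => y _; case/andP: (hw y).
have Z'Z : Z' <= a * Z by rewrite /Z mulr_sumr; apply: ler_sum => y _; case/andP: (hw y).
have Zpos : 0 < Z.
  rewrite /Z (bigD1 t0) //=.
  have : 0 <= \sum_(y | y != t0) w y by apply: sumr_ge0 => y _; exact: ltW.
  have := wpos t0; lra.
have Z'pos : 0 < Z' by lra.
have apos : 0 < a.
  case/andP: (hw t0) => h1 h2; have := wpos t0; nra.
have iZ : Z * Z^-1 = 1 by rewrite divff // gt_eqF.
have iZ' : Z' * Z'^-1 = 1 by rewrite divff // gt_eqF.
have iZp : 0 < Z^-1 by rewrite invr_gt0.
have iZ'p : 0 < Z'^-1 by rewrite invr_gt0.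
have h1 : Z'^-1 <= Z^-1.
  have : Z'^-1 = Z'^-1 * (Z * Z^-1) by rewrite iZ mulr1.
  nra.
have h2 : Z^-1 <= a * Z'^-1.
  have : Z^-1 = Z^-1 * (Z' * Z'^-1) by rewrite iZ' mulr1.
  nra.
have := wpos x; case/andP: (hw x) => hx1 hx2 hx.
split; nra.
Qed.

Definition wt (R : realType) (eps : R) n (Phi : instance n) (x : assignment n) : R :=
  expR (eps * (Defs.val Phi x)%:R).
Arguments wt {R} eps {n} Phi x.

Definition mech (R : realType) (eps : R) n (Phi : instance n) : {ffun assignment n -> R} :=
  [ffun x => wt eps Phi x / \sum_y wt eps Phi y].
Arguments mech {R} eps {n} Phi.

Lemma wt_add (R : realType) (eps : R) n (c : constraint n) (Phi : instance n) x :
  0 < eps -> wt eps Phi x <= wt eps (c +` Phi)%mset x <= expR eps * wt eps Phi x.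
Proof.
move=> he; rewrite /wt val_add natrD mulrDr expRD.
have e0 := expR_gt0 (eps * (Defs.val Phi x)%:R).
have e1 := expR_ge1Dx eps.
case: (satisfies c x) => /=; rewrite ?mulr1 ?mulr0 ?expR0 ?mul1r.
  apply/andP; split; nra.
apply/andP; split; nra.
Qed.

Lemma Z_gt0 (R : realType) (eps : R) n (Phi : instance n) :
  0 < \sum_y wt eps Phi y.
Proof.
rewrite (bigD1 [ffun=> true]) //=.
have : 0 <= \sum_(y | y != [ffun=> true]) wt eps Phi y.
  by apply: sumr_ge0 => y _; apply/ltW/expR_gt0.
have := expR_gt0 (eps * (Defs.val Phi [ffun=> true])%:R); rewrite /wt; lra.
Qed.

Lemma mech_dist (R : realType) (eps : R) n (Phi : instance n) :
  is_distribution (mech eps Phi).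
Proof.
split.
  move=> t; rewrite ffunE; apply: divr_ge0; first apply/ltW/expR_gt0.
  apply/ltW/Z_gt0.
under eq_bigr do rewrite ffunE.
by rewrite -mulr_suml divff // gt_eqF // Z_gt0.
Qed.

Lemma mech_dp (R : realType) (k n : nat) (eps : R) :
  0 < eps -> differentially_private k eps 0 (@mech R eps n).
Proof.
move=> he Phi Phi' _ _ [c [->|->]] T; rewrite addr0 /prob mulr_sumr;
  apply: ler_sum => t _; rewrite !ffunE.
- have := @ratio_bound R _ (wt eps Phi) (wt eps (c +` Phi)%mset) (expR eps)
     [ffun=> true] (fun x => expR_gt0 _) (fun x => @wt_add R eps n c Phi x he) t.
  by case.
- have := @ratio_bound R _ (wt eps Phi') (wt eps (c +` Phi')%mset) (expR eps)
     [ffun=> true] (fun x => expR_gt0 _) (fun x => @wt_add R eps n c Phi' x he) t.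
  by case.
Qed.

Section Util.
Context {n : nat}.
Implicit Types (l : seq (constraint n)) (P : pred (constraint n)).

Definition bigS l P : {set 'I_n} := \bigcup_(c <- l | P c) [set i in scope c].

Lemma bigS_card k l P : (forall c, c \in l -> (arity c <= k)%N) ->
  (#|bigS l P| <= k * count P l)%N.
Proof.
rewrite /bigS; elim: l => [|c l IH] hl; first by rewrite big_nil cards0.
rewrite big_cons /=.
have IH' := IH (fun c' hc' => hl c' (introT orP (or_intror hc'))).
case: (P c) => /=; last by rewrite add0n.
have h1 := (leq_card_setU [set i in scope c] (\bigcup_(j <- l | P j) [set i in scope j])).1.
have h2 : (#|[set i in scope c]| <= k)%N.
  rewrite cardsE; apply: leq_trans (card_size _) _; apply: hl; exact: mem_head.
apply: leq_trans h1 _; rewrite mulnDr muln1; exact: leq_add h2 IH'.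
Qed.

Lemma bigS_mem l P c i : c \in l -> P c -> i \in scope c -> i \in bigS l P.
Proof.
rewrite /bigS; elim: l => [|c' l IH] //= hc hP hi.
rewrite big_cons; rewrite inE in hc; case/orP: hc => [/eqP <-|hc].
  by rewrite hP inE inE hi.
case: (P c'); last exact: IH.
by rewrite inE (IH hc hP hi) orbT.
Qed.

Lemma count_sub_in (T : Type) (a b : pred T) (l : seq T) :
  (forall c, a c -> b c) -> (count a l <= count b l)%N.
Proof. move=> h; exact: sub_count. Qed.

Lemma count_le_in l P (Q : pred (constraint n)) : (forall c, c \in l -> P c -> Q c) ->
  (count P l <= count Q l)%N.
Proof.
elim: l => [|c l IH] //= h.
have IH' := IH (fun c' hc' => h c' (introT orP (or_intror hc'))).
have := h c (mem_head _ _).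
case: (P c); case: (Q c) => //= H; try lia.
Qed.

End Util.

Lemma arith1 (R : realType) (e X : R) : 0 < e -> e * X <= e -> X <= 1.
Proof. move=> he h; rewrite -(ler_pM2l he) mulr1; exact: h. Qed.

Lemma arith2 (R : realType) (eps k O E c : R) : 0 < eps ->
  1 - c + eps * O - eps * E <= 1 -> c <= k * O -> (1 - k / eps) * O <= E.
Proof.
move=> he h1 h2.
have h3 : eps * (O - E) <= k * O by lra.
have : O - E <= k * O / eps by rewrite ler_pdivlMr // mulrC.
rewrite mulrBl mul1r mulrAC; lra.
Qed.

Lemma utility (R : realType) (k n : nat) (eps : R) (Phi : instance n) :
  0 < eps -> arity_le k Phi ->
  (1 - k%:R / eps) * (OPT Phi)%:R <= expected_val Phi (mech eps Phi).
Proof.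
move=> he har.
have cT : (0 < #|{: assignment n}|)%N by rewrite card_ffun card_bool card_ord expn_gt0.
have [xs Hxs] := bigop.eq_bigmax (fun x : assignment n => Defs.val Phi x) cT.
have Hopt : OPT Phi = Defs.val Phi xs by rewrite /OPT Hxs.
set l := enum_mset Phi.
set S := bigS l (fun c => satisfies c xs).
have hS : (#|S| <= k * OPT Phi)%N.
  rewrite Hopt; apply: bigS_card => c hc; exact: har c hc.
set A := [set y : assignment n | [forall i, (i \in S) ==> (y i == xs i)]].
have hA : forall y, y \in A -> Defs.val Phi y = OPT Phi.
  move=> y; rewrite inE => /forallP hy.
  apply/eqP; rewrite eqn_leq; apply/andP; split.
    rewrite /OPT; exact: (@leq_bigmax _ (fun x => Defs.val Phi x) y).
  rewrite Hopt /Defs.val; apply: count_le_in => c hc hsat.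
  suff -> : satisfies c y = satisfies c xs by [].
  rewrite /satisfies; congr (tagged c _); apply: val_inj => /=; apply/eq_in_map => i hi.
  by have := hy i; rewrite (bigS_mem _ _ _ _ hc hsat hi) /= => /eqP.
have hcount : (#|{: assignment n}| <= 2 ^ #|S| * #|A|)%N.
  pose g (x : assignment n) : assignment n := [ffun i => if i \in S then xs i else x i].
  pose h (x : assignment n) : {ffun {i : 'I_n | i \in S} -> bool} := [ffun j => x (sval j)].
  pose f x := (g x, h x).
  have finj : injective f.
    move=> x y [] /ffunP hg /ffunP hh; apply/ffunP => i.
    case hi: (i \in S).
      by have := hh (exist _ i hi); rewrite !ffunE.
    by have := hg i; rewrite !ffunE hi.
  have : (#|[set f x | x in {: assignment n}]| <= #|setX A [set: {ffun {i : 'I_n | i \in S} -> bool}]|)%N.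
    apply: subset_leq_card; apply/subsetP => p /imsetP [x _ ->]; rewrite inE /=.
    apply/andP; split; last by rewrite inE.
    rewrite inE; apply/forallP => i; apply/implyP => hi; by rewrite ffunE hi.
  rewrite card_imset // cardsX cardsT !card_ffun card_bool card_sig.
  have -> : #|[pred x | x \in S]| = #|S| by apply: eq_card.
  by rewrite mulnC.
set Z := \sum_y wt eps Phi y.
set O := (OPT Phi)%:R : R.
have hZ : (#|A|)%:R * expR (eps * O) <= Z.
  rewrite /Z (bigID (fun y => y \in A)) /=.
  have -> : \sum_(i | i \in A) wt eps Phi i = \sum_(i in A) expR (eps * O).
    by apply: eq_bigr => i hi; rewrite /wt hA.
  rewrite sumr_const.
  have : 0 <= \sum_(i | i \notin A) wt eps Phi i by apply: sumr_ge0 => i _; apply/ltW/expR_gt0.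
  rewrite -mulr_natl; lra.
set v := fun x : assignment n => (Defs.val Phi x)%:R : R.
set p := mech eps Phi.
have Zpos : 0 < Z := @Z_gt0 R eps n Phi.
have hsum : \sum_x p x * expR (eps * (O - v x)) = #|{: assignment n}|%:R * expR (eps * O) / Z.
  transitivity (\sum_(x : assignment n) expR (eps * O) / Z).
    apply: eq_bigr => x _; rewrite /p ffunE /wt mulrAC -expRD /v; congr (expR _ / _); ring.
  by rewrite sumr_const -[_ *+ _]mulr_natl mulrA.
set c := (#|S|)%:R : R.
have h2 : (2 ^ #|S|)%:R <= expR c.
  rewrite natrX -[c]mulr1 expRM_natl; apply: lerXn2r; rewrite ?nnegrE //.
    exact/ltW/expR_gt0.
  have := expR_ge1Dx (1:R); lra.
have hup : \sum_x p x * expR (eps * (O - v x)) <= expR c.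
  rewrite hsum ler_pdivrMr //.
  have hc : (#|{: assignment n}|%:R : R) <= (2 ^ #|S|)%:R * #|A|%:R by rewrite -natrM ler_nat.
  have e0 := expR_gt0 (eps * O).
  have a0 : (0 : R) <= #|A|%:R by [].
  have t0 : (0 : R) <= (2 ^ #|S|)%:R by [].
  apply: le_trans (ler_wpM2r (ltW e0) hc) _.
  rewrite -mulrA; apply: le_trans (ler_wpM2l t0 hZ) _.
  by rewrite ler_pM2r.
have htan : forall x, expR c * (1 + eps * (O - v x) - c) <= expR (eps * (O - v x)).
  move=> x; have h := expR_ge1Dx (eps * (O - v x) - c).
  have e := expRD c (eps * (O - v x) - c).
  have ee : c + (eps * (O - v x) - c) = eps * (O - v x) by ring.
  rewrite ee in e; rewrite e ler_pM2l ?expR_gt0 //; by rewrite -addrA.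
have [p0 p1] := @mech_dist R eps n Phi.
have hlow : expR c * (1 - c + eps * O - eps * expected_val Phi p) <= \sum_x p x * expR (eps * (O - v x)).
  apply: le_trans (ler_sum _ (fun x _ => ler_wpM2l (p0 x) (htan x))).
  rewrite le_eqVlt; apply/orP; left; apply/eqP.
  have -> : \sum_x p x * (expR c * (1 + eps * (O - v x) - c)) =
     \sum_x (expR c * (1 - c + eps * O) * p x - expR c * eps * (p x * v x)).
    by apply: eq_bigr => x _; ring.
  rewrite sumrB -!mulr_sumr p1 /expected_val; ring.
have hfin := @arith1 R _ _ (expR_gt0 c) (le_trans hlow hup).
have hcO : c <= k%:R * O by rewrite /c /O -natrM ler_nat.
exact: (@arith2 R _ _ _ _ _ he hfin hcO).
Qed.

Theorem corollary1p1 (R : realType) (k : nat) (hk : (0 < k)%N) :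
  exists C : R, 0 < C /\
  forall eps : R, 0 < eps ->
  exists M : forall n : nat, instance n -> {ffun assignment n -> R},
    forall n : nat,
      (forall Phi : instance n, is_distribution (M n Phi)) /\
      differentially_private k eps 0 (M n) /\
      (forall Phi : instance n, arity_le k Phi ->
         (1 - C / eps) * (OPT Phi)%:R <= expected_val Phi (M n Phi)).
Proof.
exists k%:R; split; first by rewrite ltr0n.
move=> eps he; exists (fun n Phi => mech eps Phi) => n; split; last split.
- move=> Phi; exact: (@mech_dist R eps n Phi).
- exact: (@mech_dp R k n eps he).
- move=> Phi har; exact: (@utility R k n eps Phi he har).
Qed.
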